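(* Let $H$ be a graph with at least one edge, and let $m \leq e(H)$ be a positive integer. Then there exists a spanning subgraph $H' \subseteq H$ with exactly $m$ edges satisfying: (S1) $\Delta(H') - \delta(H') \leq \Delta(H) - \delta(H) + 2$; (S2) $\Delta(H \setminus H') \leq (\Delta(H) + 1)\frac{e(H) - m}{e(H)} + 1$.
   Context: $e(H)$ is the number of edges, $\Delta(\cdot)$ and $\delta(\cdot)$ denote maximum and minimum degree. A spanning subgraph has the same vertex set as $H$. $H\setminus H'$ denotes the spanning subgraph of $H$ with edge set $E(H)\setminus E(H')$. *)

(* Defs.v *)
From mathcomp Require Import all_boot all_order all_algebra.
Set Implicit Arguments. Unset Strict Implicit. Unset Printing Implicit Defensive.

(* A finite simple graph on vertex set T is given by its edge set
   E : {set {set T}}, every edge being a 2-element subset of T. *)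
Definition simple_graph (T : finType) (E : {set {set T}}) : bool :=
  [forall e in E, #|e| == 2].

Definition nedges (T : finType) (E : {set {set T}}) : nat := #|E|.

Definition deg (T : finType) (E : {set {set T}}) (v : T) : nat :=
  #|[set e in E | v \in e]|.

Definition maxdeg (T : finType) (E : {set {set T}}) : nat :=
  \max_(v : T) deg E v.

(* minimum degree delta; #|T| is a neutral upper bound since every degree
   is < #|T| (it is only the value of the empty minimum) *)
Definition mindeg (T : finType) (E : {set {set T}}) : nat :=
  \big[minn/#|T|]_(v : T) deg E v.

(* Main.v *)
Require Import Defs.
From mathcomp Require Import all_boot all_order all_algebra.
From mathcomp Require Import zify.
Import Order.TTheory GRing.Theory Num.Theory.
Set Implicit Arguments. Unset Strict Implicit.

Definition sgraph (T : finType) (F : {set {set T}}) := forall e, e \in F -> #|e| = 2.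

Definition proper (T : finType) (F : {set {set T}}) (col : {set T} -> nat) :=
  forall e1 e2, e1 \in F -> e2 \in F -> e1 != e2 ->
    forall v, v \in e1 -> v \in e2 -> col e1 != col e2.

Definition missing (T : finType) (F : {set {set T}}) (col : {set T} -> nat) v a :=
  forall e, e \in F -> v \in e -> col e != a.

Lemma edge_other (T : finType) (e : {set T}) u :
  #|e| = 2 -> u \in e -> exists w, u != w /\ e = [set u; w].
Proof.
move=> /eqP /cards2P [a [b [ab ->]]]; rewrite in_set2 => /orP [] /eqP ->.
  by exists b.
by exists a; split; [rewrite eq_sym | rewrite setUC].
Qed.

Lemma set2_inj (T : finType) (x y y' : T) :
  x != y -> [set x; y] = [set x; y'] -> y = y'.
Proof.
move=> xy E; have : y \in [set x; y'] by rewrite -E set22.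
by rewrite in_set2 eq_sym (negbTE xy) /= => /eqP.
Qed.

Definition kedge (T : finType) (F : {set {set T}}) (col : {set T} -> nat) a b e :=
  (e \in F) && ((col e == a) || (col e == b)).
Definition kadj (T : finType) (F : {set {set T}}) (col : {set T} -> nat) a b : rel T :=
  fun u w => (u != w) && kedge F col a b [set u; w].
Definition kclosed (T : finType) (F : {set {set T}}) (col : {set T} -> nat) a b (S : {set T}) :=
  forall u w, u \in S -> kadj F col a b u w -> w \in S.
Definition sw (a b x : nat) := if x == a then b else if x == b then a else x.
Definition kswap (T : finType) (col : {set T} -> nat) a b (S : {set T}) (e : {set T}) :=
  if [exists v in e, v \in S] then sw a b (col e) else col e.

Lemma sw_inj a b : a != b -> injective (sw a b).
Proof.
move=> ab x y; rewrite /sw.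
case: eqP => xa; case: eqP => ya; try case: eqP => xb; try case: eqP => yb;
  subst; move: ab; rewrite ?eqxx //; try (by move=> _ /eqP; rewrite ?eqxx);
  by move=> *; congruence.
Qed.

Lemma kedge_sub (T : finType) (F : {set {set T}}) col a b S e v v' :
  sgraph F -> kclosed F col a b S -> kedge F col a b e -> v \in e -> v' \in e ->
  v \in S -> v' \in S.
Proof.
move=> sF cS ke ve v'e vS; have eF : e \in F by case/andP: ke.
have [w [vw Ee]] := edge_other (sF _ eF) ve.
move: v'e; rewrite Ee in_set2 => /orP [/eqP -> //|/eqP ->].
by apply: (cS v) => //; rewrite /kadj vw -Ee.
Qed.

Lemma kswap_proper (T : finType) (F : {set {set T}}) col a b S :
  sgraph F -> proper F col -> a != b -> kclosed F col a b S ->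
  proper F (kswap col a b S).
Proof.
move=> sF pc ab cS e1 e2 e1F e2F e12 v ve1 ve2; rewrite /kswap.
have key : forall e e', e \in F -> e' \in F -> v \in e -> v \in e' ->
   [exists z in e, z \in S] -> ~~ [exists z in e', z \in S] ->
   sw a b (col e) != col e'.
  move=> e e' eF e'F ve ve' /existsP [z /andP [ze zS]] nS.
  case ke : (kedge F col a b e).
    have vS := kedge_sub sF cS ke ze ve zS.
    by case/negP: nS; apply/existsP; exists v; rewrite ve' vS.
  move: ke; rewrite /kedge eF /= /sw => /norP [/negbTE -> /negbTE ->].
  apply: (pc _ _ eF e'F _ v ve ve'); apply/eqP => ee; move: nS; rewrite -ee.
  by case/negP; apply/existsP; exists z; rewrite ze zS.
case: ifP => t1; case: ifP => t2.
- by rewrite (inj_eq (sw_inj ab)); apply: (pc _ _ e1F e2F e12 v).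
- by apply: key => //; rewrite t2.
- by rewrite eq_sym; apply: key => //; rewrite t1.
- by apply: (pc _ _ e1F e2F e12 v).
Qed.

Lemma kswap_missing_in (T : finType) (F : {set {set T}}) col a b (S : {set T}) v :
  a != b -> v \in S -> missing F col v b -> missing F (kswap col a b S) v a.
Proof.
move=> ab vS mb e eF ve; rewrite /kswap.
have -> : [exists z in e, z \in S] by apply/existsP; exists v; rewrite ve vS.
have := mb e eF ve; rewrite /sw.
case: (col e =P a) => [_ _|na]; first by rewrite eq_sym.
by case: (col e =P b) => // _ _; apply/eqP.
Qed.

Lemma kswap_missing_out (T : finType) (F : {set {set T}}) col a b (S : {set T}) v c :
  sgraph F -> kclosed F col a b S -> v \notin S -> missing F col v c ->
  missing F (kswap col a b S) v c.
Proof.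
move=> sF cS vS mc e eF ve; rewrite /kswap.
case: ifP => [/existsP [z /andP [ze zS]]|_]; last exact: mc.
case ke : (kedge F col a b e).
  by move: vS; rewrite (kedge_sub sF cS ke ze ve zS).
by move: ke; rewrite /kedge eF /= /sw => /norP [/negbTE -> /negbTE ->]; apply: mc.
Qed.

Lemma kswap_lt (T : finType) col a b (S : {set T}) n (e : {set T}) :
  a < n -> b < n -> col e < n -> kswap col a b S e < n.
Proof. by move=> an bn cn; rewrite /kswap /sw; do !case: ifP. Qed.

Lemma kswap_out (T : finType) col a b (S : {set T}) (e : {set T}) :
  (forall z, z \in e -> z \notin S) -> kswap col a b S e = col e.
Proof.
move=> d; rewrite /kswap; case: ifP => // /existsP [z /andP [ze zS]].
by move: (d z ze); rewrite zS.
Qed.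

Definition setcol (T : finType) (col : {set T} -> nat) (e0 : {set T}) (a : nat) :=
  fun e => if e == e0 then a else col e.

Lemma extend_proper (T : finType) (F : {set {set T}}) col (e0 : {set T}) a :
  proper (F :\ e0) col -> (forall v, v \in e0 -> missing (F :\ e0) col v a) ->
  proper F (setcol col e0 a).
Proof.
move=> pc ma e1 e2 e1F e2F e12 v ve1 ve2; rewrite /setcol.
case: (e1 =P e0) => [E1|n1]; case: (e2 =P e0) => [E2|n2].
- by move: e12; rewrite E1 E2 eqxx.
- rewrite eq_sym; apply: (ma v); first by rewrite -E1.
    by rewrite !inE e2F andbT; apply/eqP.
  done.
- apply: (ma v); first by rewrite -E2.
    by rewrite !inE e1F andbT; apply/eqP.
  done.
- by apply: (pc _ _ _ _ e12 v) => //; rewrite !inE ?e1F ?e2F andbT; apply/eqP.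
Qed.

Lemma exists_missing (T : finType) (F : {set {set T}}) col v n :
  deg F v < n -> exists2 a, a < n & missing F col v a.
Proof.
move=> dn; pose U := [seq col e | e <- enum [set e in F | v \in e]].
have sU : size U < n by rewrite size_map -cardE.
have : ~~ (all (fun a => a \in U) (iota 0 n)).
  apply/negP => /allP sub.
  have := uniq_leq_size (iota_uniq 0 n) sub.
  by rewrite size_iota leqNgt sU.
case/allPn => a; rewrite mem_iota add0n => an aU; exists a => // e eF ve.
apply/eqP => ca; case/negP: aU; rewrite -ca; apply/mapP; exists e => //.
by rewrite mem_enum inE eF ve.
Qed.

Lemma path_lemma (T : finType) (r : rel T) a b c :
  symmetric r ->
  (forall u w1 w2 w3, r u w1 -> r u w2 -> r u w3 -> w1 != w2 -> (w3 == w1) || (w3 == w2)) ->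
  (forall w1 w2, r a w1 -> r a w2 -> w1 = w2) ->
  (forall w1 w2, r b w1 -> r b w2 -> w1 = w2) ->
  (forall w1 w2, r c w1 -> r c w2 -> w1 = w2) ->
  a != b -> c != a -> c != b -> connect r a b -> connect r a c -> False.
Proof.
move=> rs nb2 da db dc ab ca cb /connectP [p0 pp0 Eb] /connectP [pc ppc Ec]; subst b c.
move: ab db cb; case: (shortenP pp0) => p pp uq _ ab db cb {pp0}.
set q := a :: p; set N := size p.
have step : forall i, i < N -> r (nth a q i) (nth a q i.+1).
  by move=> i iN; exact: (pathP a pp i iN).
have bq : last a p = nth a q N by rewrite /q /N -[size p]/((size (a :: p)).-1) nth_last.
have Npos : 0 < N.
  by move: ab; rewrite /N; case: (p) => //=; rewrite eqxx.
have inq : forall i, i <= N -> nth a q i \in q by move=> i iN; apply: mem_nth.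
have sq : size q = N.+1 by [].
have interior : forall i, 0 < i < N ->
    [/\ r (nth a q i) (nth a q i.-1), r (nth a q i) (nth a q i.+1)
      & nth a q i.-1 != nth a q i.+1].
  move=> i /andP [i0 iN]; split.
  - rewrite rs; have := step i.-1; rewrite prednK //; apply; lia.
  - exact: step.
  - rewrite nth_uniq //; try lia; rewrite ?sq; lia.
have closedq : forall u w, u \in q -> r u w -> w \in q.
  move=> u w uin ruw; have iq : index u q < N.+1 by rewrite -sq index_mem.
  have Eu : u = nth a q (index u q) by rewrite nth_index.
  case: (posnP (index u q)) => [i0|ip].
    have ua : u = a by rewrite Eu i0.
    have := da w (nth a q 1); rewrite -ua => /(_ ruw); rewrite ua.
    move=> /(_ (step 0 Npos)) ->; exact: inq.
  case: (ltngtP (index u q) N) => [iN|Ni|iN].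
  - have [r1 r2 ne] := interior _ (introT andP (conj ip iN)).
    rewrite -Eu in r1 r2.
    by case/orP: (nb2 _ _ _ _ r1 r2 ruw ne) => /eqP ->; apply: inq; lia.
  - by exfalso; move: iq Ni; clear; lia.
  - have ub : u = last a p by rewrite bq Eu iN.
    have rp : r u (nth a q N.-1).
      by rewrite rs Eu iN; have := step N.-1; rewrite prednK //; apply; lia.
    have := db w (nth a q N.-1); rewrite -ub => /(_ ruw rp) ->.
    by apply: inq; lia.
have cq : forall x s, x \in q -> path r x s -> last x s \in q.
  move=> x s; elim: s x => [//|y s IH] x xq /= /andP [rxy ps].
  by apply: IH => //; apply: closedq rxy.
have := cq a pc (mem_head _ _) ppc; set c' := last a pc => c'q.
have Ec : c' = nth a q (index c' q) by rewrite nth_index.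
have i0 : 0 < index c' q.
  by rewrite lt0n; apply/eqP => i0; move: ca; rewrite -/c' Ec i0 eqxx.
have iN : index c' q < N.
  have : index c' q < N.+1 by rewrite -sq index_mem.
  rewrite ltnS leq_eqVlt => /orP [/eqP iN|//].
  by move: cb; rewrite -/c' bq Ec iN eqxx.
have [r1 r2 ne] := interior _ (introT andP (conj i0 iN)).
rewrite -Ec in r1 r2.
by move: ne; rewrite (dc _ _ r1 r2) eqxx.
Qed.

Definition rot (T : finType) (c : {set T} -> nat) (es : seq {set T}) i :=
  fun e => if index e es < i then c (nth set0 es (index e es).+1) else c e.

Lemma es_facts (T : finType) (x y0 : T) (ys : seq T) :
  x \notin ys -> uniq ys ->
  let es := [seq [set x; y] | y <- ys] in
  [/\ size es = size ys,
      forall j, j < size ys -> nth set0 es j = [set x; nth y0 ys j],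
      forall j, j < size ys -> index [set x; nth y0 ys j] es = j,
      forall e : {set T}, e \in es -> exists2 j, j < size ys & e = [set x; nth y0 ys j]
    & forall e : {set T}, x \notin e -> index e es = size ys].
Proof.
move=> xys uys es.
have inj : {in ys &, injective (fun y => [set x; y])}.
  move=> y y' yin _ /set2_inj; apply; apply/eqP => xy.
  by move: xys; rewrite xy yin.
have ues : uniq es by rewrite map_inj_in_uniq.
have nth_es : forall j, j < size ys -> nth set0 es j = [set x; nth y0 ys j].
  by move=> j jn; rewrite (nth_map y0).
split.
- by rewrite size_map.
- exact: nth_es.
- move=> j jn; rewrite -nth_es //; apply: index_uniq => //; by rewrite size_map.
- move=> e /mapP [y yin ->]; exists (index y ys); first by rewrite index_mem.
  by rewrite nth_index.
- move=> e xe; have : e \notin es.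
    by apply/negP => /mapP [y _ Ee]; move: xe; rewrite Ee set21.
  rewrite -index_mem -leqNgt size_map => h; apply/eqP; rewrite eqn_leq h andbT.
  by have := index_size e es; rewrite size_map.
Qed.

Definition fanH (T : finType) (F : {set {set T}}) (x y0 : T) (ys : seq T) (c : {set T} -> nat) :=
  [/\ sgraph F, x \notin ys, uniq ys, nth y0 ys 0 = y0 /\ 0 < size ys &
      [/\ [set x; y0] \in F,
      (forall j, 0 < j < size ys -> [set x; nth y0 ys j] \in F :\ [set x; y0]),
      (forall j, j.+1 < size ys ->
          missing (F :\ [set x; y0]) c (nth y0 ys j) (c [set x; nth y0 ys j.+1]))
    & proper (F :\ [set x; y0]) c]].

Lemma rot_basic (T : finType) (F : {set {set T}}) (x y0 : T) (ys : seq T) c i :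
  fanH F x y0 ys c -> i < size ys ->
  let es := [seq [set x; y] | y <- ys] in
  [/\ forall e, e \in F :\ nth set0 es i -> i <= index e es -> e \in F :\ [set x; y0],
      forall e, index e es < i ->
        e = [set x; nth y0 ys (index e es)] /\ rot c es i e = c [set x; nth y0 ys (index e es).+1],
      forall e, i <= index e es -> rot c es i e = c e
    & forall j, j < size ys -> nth set0 es j = [set x; nth y0 ys j] /\ index [set x; nth y0 ys j] es = j].
Proof.
move=> [sF xys uys [hy0 sz] [e0F esF fanm pc]] isz es.
have [ses nth_es idx_es mem_es idx_out] := es_facts y0 xys uys.
split.
- move=> e; rewrite !inE => /andP [ne eF] ie; rewrite eF andbT.
  apply/negP => /eqP Ee; move: ie ne.
  have E0 : [set x; y0] = [set x; nth y0 ys 0] by rewrite hy0.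
  rewrite Ee {1}E0 (idx_es 0 sz) leqn0 => /eqP i0.
  by rewrite i0 (nth_es 0 sz) hy0 eqxx.
- move=> e ie; have ein : e \in es by rewrite -index_mem ses (leq_trans ie) // ltnW.
  have [j jn Ee] := mem_es e ein.
  have ej : index e es = j by rewrite Ee idx_es.
  rewrite ej; split => //; rewrite /rot ie ej nth_es //.
  by rewrite ej in ie; apply: leq_ltn_trans isz.
- by move=> e ie; rewrite /rot ltnNge ie.
- by move=> j jn; rewrite nth_es // idx_es.
Qed.

Lemma rot_proper (T : finType) (F : {set {set T}}) (x y0 : T) (ys : seq T) c i :
  fanH F x y0 ys c -> i < size ys ->
  let es := [seq [set x; y] | y <- ys] in
  proper (F :\ nth set0 es i) (rot c es i).
Proof.
move=> fH isz es.
have [sF xys uys [hy0 sz] [e0F esF fanm pc]] := fH.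
have [inFp small big esj] := rot_basic fH isz.
rewrite -/es in inFp small big esj.
have asym : forall e1 e2 v, e1 \in F :\ nth set0 es i -> e2 \in F :\ nth set0 es i ->
    e1 != e2 -> v \in e1 -> v \in e2 -> index e1 es < i -> i <= index e2 es ->
    rot c es i e1 != rot c es i e2.
  move=> e1 e2 v e1F e2F e12 ve1 ve2 i1 i2.
  have [E1 ->] := small e1 i1; rewrite (big e2 i2).
  set j := index e1 es in E1 i1 *.
  have e2p := inFp e2 e2F i2.
  have j1 : j.+1 < size ys by apply: leq_ltn_trans isz.
  have ejp : [set x; nth y0 ys j.+1] \in F :\ [set x; y0] by apply: esF.
  move: ve1; rewrite E1 in_set2 => /orP [/eqP vx|/eqP vy].
  - rewrite vx in ve2; apply: (pc _ _ ejp e2p _ x (set21 _ _) ve2).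
    apply/eqP => E2; move: i2; rewrite -E2 (proj2 (esj _ j1)) => ij.
    have ij' : j.+1 = i by apply/eqP; rewrite eqn_leq ij i1.
    by move: e2F; rewrite -E2 ij' (proj1 (esj _ isz)) !inE eqxx.
  - by rewrite eq_sym; apply: (fanm j j1); rewrite -?vy.
move=> e1 e2 e1F e2F e12 v ve1 ve2.
case: (ltnP (index e1 es) i) => i1; case: (ltnP (index e2 es) i) => i2.
- have [E1 ->] := small e1 i1; have [E2 ->] := small e2 i2.
  have j1 : 0 < (index e1 es).+1 < size ys by apply: leq_ltn_trans isz.
  have j2 : 0 < (index e2 es).+1 < size ys by apply: leq_ltn_trans isz.
  apply: (pc _ _ (esF _ j1) (esF _ j2) _ x); rewrite ?set21 //.
  apply/negP => /eqP /(congr1 (fun e => index e es)).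
  rewrite (proj2 (esj _ (proj2 (andP j1)))) (proj2 (esj _ (proj2 (andP j2)))) => -[] ee.
  by move: e12; rewrite E1 E2 ee eqxx.
- exact: (asym e1 e2 v).
- by rewrite eq_sym; apply: (asym e2 e1 v); rewrite // eq_sym.
- rewrite (big e1 i1) (big e2 i2).
  exact: (pc _ _ (inFp e1 e1F i1) (inFp e2 e2F i2) e12 v).
Qed.

Lemma rot_more (T : finType) (F : {set {set T}}) (x y0 : T) (ys : seq T) c i n :
  fanH F x y0 ys c -> i < size ys ->
  let es := [seq [set x; y] | y <- ys] in
  let Fp := F :\ [set x; y0] in
  [/\ (forall e, e \in Fp -> c e < n) -> forall e, e \in F :\ nth set0 es i -> rot c es i e < n,
      forall a, missing Fp c x a -> missing (F :\ nth set0 es i) (rot c es i) x a,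
      forall a v, v != x -> v \notin take i ys -> missing Fp c v a ->
           missing (F :\ nth set0 es i) (rot c es i) v a,
      forall e : {set T}, x \notin e -> rot c es i e = c e /\ (e \in F :\ nth set0 es i) = (e \in Fp)
    & nth set0 es i \in F].
Proof.
move=> fH isz es Fp.
have [sF xys uys [hy0 sz] [e0F esF fanm pc]] := fH.
have [inFp small big esj] := rot_basic fH isz.
rewrite -/es -/Fp in inFp small big esj.
have [ses nth_es idx_es mem_es idx_out] := es_facts y0 xys uys.
have jp : forall e, index e es < i -> 0 < (index e es).+1 < size ys.
  by move=> e ie; apply: leq_ltn_trans isz.
split.
- move=> cn e eF; case: (ltnP (index e es) i) => ie.
    by rewrite (proj2 (small e ie)); apply: cn; apply: esF; apply: jp.
  by rewrite big //; apply: cn; apply: inFp.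
- move=> a ma e eF xe; case: (ltnP (index e es) i) => ie.
    by rewrite (proj2 (small e ie)); apply: ma; [apply: esF; apply: jp | apply: set21].
  by rewrite big //; apply: ma => //; apply: inFp.
- move=> a v vx vt ma e eF ve; case: (ltnP (index e es) i) => ie.
    have [Ee _] := small e ie; move: ve; rewrite Ee in_set2 (negbTE vx) /= => /eqP vy.
    case/negP: vt; rewrite vy -(nth_take y0 ie); apply: mem_nth.
    by rewrite size_take isz.
  by rewrite big //; apply: ma => //; apply: inFp.
- move=> e xe; rewrite big; last by rewrite (idx_out e xe) ltnW.
  split => //; rewrite /Fp !inE; congr andb.
  rewrite (proj1 (esj _ isz)); have -> : e != [set x; nth y0 ys i].
    by apply/eqP => Ee; move: xe; rewrite Ee set21.
  suff -> : e != [set x; y0] by [].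
  by apply/eqP => Ee; move: xe; rewrite Ee set21.
- rewrite (proj1 (esj _ isz)); case: (posnP i) => [->|ip]; first by rewrite hy0.
  by have := esF i; rewrite ip isz => /(_ isT); rewrite inE => /andP [].
Qed.

Lemma kadj_sym (T : finType) (F : {set {set T}}) col a b : symmetric (kadj F col a b).
Proof. by move=> u w; rewrite /kadj eq_sym setUC. Qed.

Lemma kadj_edge (T : finType) (F : {set {set T}}) col a b u w :
  kadj F col a b u w ->
  [/\ u != w, [set u; w] \in F & (col [set u; w] == a) || (col [set u; w] == b)].
Proof. by case/andP => uw /andP [-> ->]. Qed.

Lemma kadj_nb2 (T : finType) (F : {set {set T}}) col a b u w1 w2 w3 :
  proper F col -> kadj F col a b u w1 -> kadj F col a b u w2 -> kadj F col a b u w3 ->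
  w1 != w2 -> (w3 == w1) || (w3 == w2).
Proof.
move=> pc /kadj_edge [u1 f1 c1] /kadj_edge [u2 f2 c2] /kadj_edge [u3 f3 c3] w12.
have ne : forall w w', u != w -> w != w' -> [set u; w] != [set u; w'].
  by move=> w w' uw ww'; apply/eqP => /(set2_inj uw) /eqP; rewrite (negbTE ww').
case: (w3 =P w1) => // n31; case: (w3 =P w2) => // n32.
have d12 := pc _ _ f1 f2 (ne _ _ u1 w12) u (set21 _ _) (set21 _ _).
have d31 := pc _ _ f3 f1 (ne _ _ u3 (introN eqP n31)) u (set21 _ _) (set21 _ _).
have d32 := pc _ _ f3 f2 (ne _ _ u3 (introN eqP n32)) u (set21 _ _) (set21 _ _).
move: c1 c2 c3 d12 d31 d32.
by do 3 case/orP => /eqP ->; rewrite ?eqxx.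
Qed.

Lemma kadj_deg1 (T : finType) (F : {set {set T}}) col a b u w1 w2 :
  proper F col -> (missing F col u a \/ missing F col u b) ->
  kadj F col a b u w1 -> kadj F col a b u w2 -> w1 = w2.
Proof.
move=> pc mu /kadj_edge [u1 f1 c1] /kadj_edge [u2 f2 c2].
case: (w1 =P w2) => // n12; exfalso.
have ne : [set u; w1] != [set u; w2].
  by apply/eqP => /(set2_inj u1) /eqP; apply/negP/eqP.
have d12 := pc _ _ f1 f2 ne u (set21 _ _) (set21 _ _).
case: mu => mu.
- have m1 := mu _ f1 (set21 _ _); have m2 := mu _ f2 (set21 _ _).
  move: c1 c2 d12 m1 m2; rewrite /=.
  by do 2 case/orP => /eqP ->; rewrite ?eqxx.
- have m1 := mu _ f1 (set21 _ _); have m2 := mu _ f2 (set21 _ _).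
  move: c1 c2 d12 m1 m2.
  by do 2 case/orP => /eqP ->; rewrite ?eqxx.
Qed.

Lemma connect_sub (T : finType) (r : rel T) (S : {set T}) a z :
  (forall u w, u \in S -> r u w -> w \in S) -> a \in S -> connect r a z -> z \in S.
Proof.
move=> cS aS /connectP [p pp ->]; elim: p a aS pp => [//|y p IH] a aS /= /andP [ray pp].
by apply: IH pp; apply: cS ray.
Qed.

Lemma kclosed_comp (T : finType) (F : {set {set T}}) col a b y :
  kclosed F col a b [set z | connect (kadj F col a b) y z].
Proof.
move=> u w; rewrite !inE => yu uw; apply: connect_trans yu _; exact: connect1.
Qed.

Lemma finish (T : finType) (F : {set {set T}}) (e0 : {set T}) col a n :
  e0 \in F -> (forall v, v \in e0 -> missing (F :\ e0) col v a) ->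
  proper (F :\ e0) col -> (forall e, e \in F :\ e0 -> col e < n) -> a < n ->
  exists col', proper F col' /\ forall e, e \in F -> col' e < n.
Proof.
move=> e0F ma pc cn an; exists (setcol col e0 a); split.
  exact: extend_proper.
move=> e eF; rewrite /setcol; case: eqP => // /eqP ne; apply: cn.
by rewrite !inE ne eF.
Qed.

Definition missb (T : finType) (F : {set {set T}}) (col : {set T} -> nat) v a :=
  [forall e in F, (v \in e) ==> (col e != a)].

Lemma missbP (T : finType) (F : {set {set T}}) col v a :
  reflect (missing F col v a) (missb F col v a).
Proof.
apply: (iffP forall_inP) => h e eF.
  by move=> ve; move: (h e eF); rewrite ve.
by apply/implyP; apply: h.
Qed.

Lemma deg_sub (T : finType) (F G : {set {set T}}) v : F \subset G -> deg F v <= deg G v.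
Proof.
move=> FG; apply: subset_leq_card; apply/subsetP => e; rewrite !inE => /andP [eF ->].
by rewrite (subsetP FG).
Qed.

Lemma max_fan (T : finType) (F : {set {set T}}) (x y0 : T) c :
  sgraph F -> x != y0 -> [set x; y0] \in F -> proper (F :\ [set x; y0]) c ->
  let Fp := F :\ [set x; y0] in
  let R : rel T := fun u w => ([set x; w] \in Fp) && missb Fp c u (c [set x; w]) in
  exists t : seq T, [/\ fanH F x y0 (y0 :: t) c, path R y0 t &
     forall y, y \notin y0 :: t -> y != x -> ~~ R (last y0 t) y].
Proof.
move=> sF xy0 e0F pc Fp R.
pose isfan (t : seq T) := [&& path R y0 t, uniq (y0 :: t) & x \notin y0 :: t].
pose P s := [exists t : s.-tuple T, isfan t].
have P0 : exists s, P s by exists 0; apply/existsP; exists [tuple];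
  rewrite /isfan /= !inE.
have Pb : forall s, P s -> s <= #|T|.
  move=> s /existsP [t /and3P [_ ut _]]; have := max_card (mem (y0 :: t)).
  by rewrite (card_uniqP ut) /= size_tuple => h; exact: ltnW.
case: (ex_maxnP P0 Pb) => s /existsP [t ft] smax.
have [pt ut xt] := and3P ft.
exists t; split => //.
- split => //; split => //.
  + move=> j /andP [j0 js]; have := pathP y0 pt j.-1.
    rewrite prednK //= => /(_ js) /andP [].
    by case: j j0 js => [//|j] _ _ /= h _.
  + move=> j js; have := pathP y0 pt j js => /andP [_ /missbP] //.
- move=> y yt yx; apply/negP => Ry.
  have : P (size (rcons t y)).
    apply/existsP; exists (in_tuple (rcons t y)) => /=.
    rewrite /isfan rcons_path pt Ry /= -rcons_cons.
    move: ut xt yt; rewrite /= !mem_rcons !inE !negb_or rcons_uniq.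
    move=> /andP [h1 h2] /andP [h3 h4] /andP [yy0 h5].
    by rewrite mem_rcons inE negb_or h1 h2 h3 h4 h5 eq_sym yy0 eq_sym yx.
  by move/smax; rewrite size_rcons size_tuple ltnn.
Qed.

Lemma vizing_step (T : finType) (F : {set {set T}}) (x y0 : T) c n :
  sgraph F -> x != y0 -> [set x; y0] \in F -> proper (F :\ [set x; y0]) c ->
  (forall e, e \in F :\ [set x; y0] -> c e < n) -> (forall v, deg F v < n) ->
  exists col, proper F col /\ forall e, e \in F -> col e < n.
Proof.
move=> sF xy0 e0F pc cn dn.
have [t [fH pt tmax]] := max_fan sF xy0 e0F pc.
set Fp := F :\ [set x; y0] in cn pc tmax pt.
set ys := y0 :: t in fH tmax.
set k := size t.
have [_ xys uys [hy0 sz] [_ esF fanm _]] := fH.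
set es := [seq [set x; y] | y <- ys].
have [ses nth_es idx_es mem_es idx_out] := es_facts y0 xys uys.
have ksz : k < size ys by [].
have sFp : forall G : {set {set T}}, G \subset F -> sgraph G.
  by move=> G GF e eG; apply: sF; apply: (subsetP GF).
have dFp : forall v, deg Fp v < n.
  by move=> v; apply: leq_ltn_trans (dn v); apply: deg_sub; apply: subsetDl.
have [al aln ma] := exists_missing c (dFp x).
set yk := nth y0 ys k.
have ykl : yk = last y0 t by rewrite /yk /ys -[k]/((size (y0 :: t)).-1) nth_last.
have [be ben mb] := exists_missing c (dFp yk).
have Ynx : forall j, j < size ys -> nth y0 ys j != x.
  by move=> j js; apply/eqP => E; move: xys; rewrite -E mem_nth.
have Ynt : forall j, j < size ys -> nth y0 ys j \notin take j ys.
  move=> j js; apply/negP => mem; have E := nth_index y0 mem.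
  set l := index _ _ in E.
  have lj : l < j.
    by have := mem; rewrite -index_mem (size_takel (ltnW js)).
  move: E; rewrite nth_take // => /eqP; rewrite nth_uniq //; last by apply: ltn_trans js.
  by rewrite ltn_eqF.
have ESi : forall j, j < size ys -> nth set0 es j = [set x; nth y0 ys j] by [].
case: (boolP (missb Fp c x be)) => [/missbP mxb|].
  have [rlt rmx rmv rout rF] := rot_more n fH ksz.
  apply: (finish (e0 := nth set0 es k) (col := rot c es k) (a := be)) => //.
  - move=> v; rewrite {1}nth_es // in_set2 => /orP [] /eqP ->.
      exact: rmx mxb.
    by apply: rmv => //; [apply: Ynx | apply: Ynt].
  - exact: rot_proper.
  - exact: rlt.
rewrite negb_forall_in => /existsP [e /andP [eFp]]; rewrite negb_imply negbK.
case/andP=> xe /eqP ceb.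
have eF : e \in F by move: eFp; rewrite inE => /andP [].
have [y [xy Ee]] := edge_other (sF e eF) xe.
have yys : y \in ys.
  apply/negPn/negP => yn; have := tmax y yn; rewrite eq_sym xy => /(_ isT).
  rewrite -Ee eFp /= => /negP; apply; apply/missbP; rewrite ceb -ykl; exact: mb.
set i := index y ys.
have isz : i < size ys by rewrite index_mem.
have Ei : e = [set x; nth y0 ys i] by rewrite nth_index.
have i0 : 0 < i.
  rewrite lt0n; apply/eqP => i0; move: eFp; rewrite Ei i0 hy0 !inE eqxx.
  done.
have ik : i < k.
  have : i <= k by [].
  rewrite leq_eqVlt => /orP [/eqP ik|//]; exfalso.
  by have := mb e eFp; rewrite ceb eqxx Ei ik set22 => /(_ isT).
have abe : al != be by rewrite -ceb eq_sym; apply: ma.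
have ceib : c [set x; nth y0 ys i] = be by rewrite -Ei.
have mbi1 : missing Fp c (nth y0 ys i.-1) be.
  by rewrite -ceib; have := fanm i.-1; rewrite prednK //; apply.
have isz1 : i.-1 < size ys by apply: leq_ltn_trans (leq_pred i) isz.
have [rltK rmxK rmvK routK rFK] := rot_more n fH ksz.
have [rltI rmxI rmvI routI rFI] := rot_more n fH isz1.
have [inFpK smallK bigK esjK] := rot_basic fH ksz.
have [inFpI smallI bigI esjI] := rot_basic fH isz1.
have pK := rot_proper fH ksz.
have pI := rot_proper fH isz1.
rewrite -/es -/Fp in rltK rmxK rmvK routK rFK rltI rmxI rmvI routI rFI
  inFpK smallK bigK esjK inFpI smallI bigI esjI pK pI.
set ck := rot c es k in rltK rmxK rmvK routK pK smallK bigK.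
set ci := rot c es i.-1 in rltI rmxI rmvI routI pI smallI bigI.
set Fk := F :\ nth set0 es k in rltK rmxK rmvK routK pK inFpK.
set Fi := F :\ nth set0 es i.-1 in rltI rmxI rmvI routI pI inFpI.
have sFk : sgraph Fk by apply: sFp; apply: subsetDl.
have sFi : sgraph Fi by apply: sFp; apply: subsetDl.
have mxk : missing Fk ck x al := rmxK al ma.
have mykb : missing Fk ck yk be := rmvK be yk (Ynx k ksz) (Ynt k ksz) mb.
pose rK := kadj Fk ck al be.
pose S := [set z | connect rK yk z].
case: (boolP (x \in S)) => xS; last first.
  apply: (finish (e0 := nth set0 es k) (col := kswap ck al be S) (a := al)) => //.
  - move=> v; rewrite {1}nth_es // in_set2 => /orP [] /eqP ->.
      by apply: kswap_missing_out => //; exact: kclosed_comp.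
    by apply: kswap_missing_in => //; rewrite inE connect0.
  - by apply: kswap_proper => //; exact: kclosed_comp.
  - by move=> f fF; apply: kswap_lt => //; exact: rltK.
set Yi1 := nth y0 ys i.-1.
have myib : missing Fi ci Yi1 be := rmvI be Yi1 (Ynx _ isz1) (Ynt _ isz1) mbi1.
have mxi : missing Fi ci x al := rmxI al ma.
pose rI := kadj Fi ci al be.
pose S' := [set z | connect rI Yi1 z].
case: (boolP (x \in S')) => xS'; last first.
  apply: (finish (e0 := nth set0 es i.-1) (col := kswap ci al be S') (a := al)) => //.
  - move=> v; rewrite {1}nth_es // in_set2 => /orP [] /eqP ->.
      by apply: kswap_missing_out => //; exact: kclosed_comp.
    by apply: kswap_missing_in => //; rewrite inE connect0.
  - by apply: kswap_proper => //; exact: kclosed_comp.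
  - by move=> f fF; apply: kswap_lt => //; exact: rltI.
exfalso.
set Yi := nth y0 ys i.
have i1i : (i.-1).+1 = i by rewrite prednK.
have ES1 : nth set0 es i.-1 = [set x; Yi1] by rewrite nth_es.
have idx1 : index [set x; Yi1] es = i.-1 by rewrite idx_es.
have idxi : index [set x; Yi] es = i by rewrite idx_es.
have Yi1x : Yi1 != x by apply: Ynx.
have Yix : Yi != x by apply: Ynx.
have Yiyk : Yi != yk by rewrite /Yi /yk nth_uniq // ltn_eqF.
have rKx : rK x Yi1.
  rewrite /rK /kadj eq_sym Yi1x /= /kedge.
  have i1k : index [set x; Yi1] es < k by rewrite idx1; apply: leq_ltn_trans ik; exact: leq_pred.
  rewrite (proj2 (smallK _ i1k)) idx1 i1i -/Yi ceib eqxx orbT andbT.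
  rewrite /Fk !inE -ES1 rFI andbT nth_es // nth_es //.
  have xYi1 : x != Yi1 by rewrite eq_sym.
  apply/eqP => /(set2_inj xYi1) /eqP; rewrite nth_uniq //.
  by rewrite ltn_eqF //; apply: leq_ltn_trans ik; exact: leq_pred.
have Yi1S : Yi1 \in S.
  by move: xS; rewrite !inE => h; apply: connect_trans h (connect1 rKx).
have Yi0 : 0 < i < size ys by rewrite i0 isz.
have esiFp : [set x; Yi] \in Fp := esF i Yi0.
have F4 : forall f, f \in Fi -> x \in f -> (ci f == al) || (ci f == be) -> f = [set x; Yi].
  move=> f fF xf /orP [/eqP cal|/eqP cbe].
    by move: (mxi f fF xf); rewrite cal eqxx.
  apply/eqP; apply/negPn/negP => nf.
  have esiFi : [set x; Yi] \in Fi.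
    rewrite /Fi !inE ES1; move: esiFp; rewrite inE => /andP [_ ->]; rewrite andbT.
    have xYi1 : x != Yi1 by rewrite eq_sym.
    apply/eqP => /esym /(set2_inj xYi1) /eqP; rewrite nth_uniq //.
    by move/eqP => h; have := ltn_predL i; rewrite {1}h ltnn i0.
  have := pI _ _ fF esiFi nf x xf (set21 _ _).
  rewrite -/ci cbe (bigI [set x; Yi]); last by rewrite idxi leq_pred.
  by rewrite ceib eqxx.
have F5 : missing Fk ck Yi be.
  move=> f fF Yif; case: (ltnP (index f es) k) => jf.
    have [Ef ->] := smallK f jf.
    have ij : index f es = i.
      have : Yi == nth y0 ys (index f es) by move: Yif; rewrite {1}Ef in_set2 (negbTE Yix) orFb.
      rewrite /Yi nth_uniq //; first by move/eqP.
      exact: ltn_trans jf ksz.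
    rewrite ij -ceib; apply: (pc _ _ _ esiFp _ x (set21 _ _) (set21 _ _)).
      by apply: esF; rewrite /= ltnS ik.
    have xYi : x != Yi by rewrite eq_sym.
    apply/eqP => /esym /(set2_inj xYi) /eqP; rewrite nth_uniq //.
    by rewrite eqn_leq ltnn andbF.
  rewrite (bigK f jf) -ceib; apply: (pc _ _ (inFpK f fF jf) esiFp _ Yi Yif (set22 _ _)).
  apply/eqP => Ef; move: jf; rewrite Ef idxi leqNgt ik.
  done.
have YiS : Yi \in S.
  apply/negPn/negP => YiS.
  pose S'' := S :\ x.
  have cl : forall u w, u \in S'' -> rI u w -> w \in S''.
    move=> u w; rewrite !inE => /andP [ux uS] /kadj_edge [uw fF fc].
    case: (boolP (x \in [set u; w])) => xf.
      have Ef := F4 _ fF xf fc.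
      have : u \in [set x; Yi] by rewrite -Ef set21.
      rewrite in_set2 (negbTE ux) /= => /eqP uYi.
      by move: YiS; rewrite -uYi inE uS.
    have [ce fe] := routK _ xf; have [ce' fe'] := routI _ xf.
    have rKuw : rK u w by rewrite /rK /kadj uw /kedge fe -fe' fF ce -ce' fc.
    rewrite (connect_trans uS (connect1 rKuw)) andbT.
    by apply/eqP => wx; move: xf; rewrite -wx set22.
  have cx : connect rI Yi1 x by move: xS'; rewrite inE.
  have : x \in S''.
    by apply: (connect_sub cl _ cx); rewrite !inE Yi1x; move: Yi1S; rewrite inE.
  by rewrite !inE eqxx.
apply: (@path_lemma _ rK yk x Yi).
- exact: kadj_sym.
- by move=> u w1 w2 w3; apply: kadj_nb2.
- by move=> w1 w2; apply: kadj_deg1 => //; right.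
- by move=> w1 w2; apply: kadj_deg1 => //; left.
- by move=> w1 w2; apply: kadj_deg1 => //; right.
- exact: Ynx k ksz.
- exact: Yiyk.
- exact: Yix.
- by move: xS; rewrite inE.
- by move: YiS; rewrite inE.
Qed.

Lemma vizing (T : finType) (E : {set {set T}}) n :
  sgraph E -> (forall v, deg E v < n) -> forall F : {set {set T}}, F \subset E ->
  exists col, proper F col /\ forall e, e \in F -> col e < n.
Proof.
move=> sE dn F; have [m] := ubnP #|F|; elim: m F => // m IH F cF FE.
case: (set_0Vmem F) => [->|[e0 e0F]].
  by exists (fun _ => 0); split => // e; rewrite inE.
have sF : sgraph F by move=> e eF; apply: sE; apply: (subsetP FE).
have /cards2P [x [y0 [xy0 Ee0]]] : #|e0| == 2 by rewrite sF.
have [c [pc cn]] : exists c, proper (F :\ e0) c /\ forall e, e \in F :\ e0 -> c e < n.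
  apply: IH; last by apply: subset_trans FE; apply: subsetDl.
  by rewrite -ltnS; apply: leq_trans cF; rewrite ltnS (cardsD1 e0 F) e0F.
rewrite Ee0 in e0F pc cn.
apply: (vizing_step sF xy0 e0F pc cn).
by move=> v; apply: leq_ltn_trans (dn v); apply: deg_sub.
Qed.

Lemma card_cols (T : finType) (E : {set {set T}}) (col : {set T} -> nat) (l : seq nat) :
  uniq l -> #|[set f in E | col f \in l]| = \sum_(a <- l) #|[set f in E | col f == a]|.
Proof.
elim: l => [_|a l IH /= /andP [al ul]].
  by rewrite big_nil; apply/eqP; rewrite cards_eq0; apply/eqP/setP => f; rewrite !inE andbF.
rewrite big_cons -IH //.
have -> : [set f in E | col f \in a :: l] =
          [set f in E | col f == a] :|: [set f in E | col f \in l].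
  by apply/setP => f; rewrite !inE -andb_orr.
have := cardsUI [set f in E | col f == a] [set f in E | col f \in l].
have -> : [set f in E | col f == a] :&: [set f in E | col f \in l] = set0.
  apply/setP => f; rewrite !inE; apply/negP => /andP [/andP [_ /eqP ca] /andP [_]].
  by rewrite ca (negbTE al).
by rewrite cards0 addn0.
Qed.

Lemma deg_colors (T : finType) (F : {set {set T}}) col v (l : seq nat) :
  proper F col -> (forall f, f \in F -> v \in f -> col f \in l) -> deg F v <= size l.
Proof.
move=> pc hl; rewrite /deg cardE.
set A := [set f in F | v \in f].
have <- : size [seq col f | f <- enum A] = size (enum A) by rewrite size_map.
apply: uniq_leq_size.
  rewrite map_inj_in_uniq ?enum_uniq // => f1 f2.
  rewrite !mem_enum !inE => /andP [f1F vf1] /andP [f2F vf2] cf.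
  by apply/eqP/negPn/negP => ne; move: (pc _ _ f1F f2F ne v vf1 vf2); rewrite cf eqxx.
by move=> a /mapP [f]; rewrite mem_enum inE => /andP [fF vf] ->; apply: hl.
Qed.

Lemma sumn_le (s : seq nat) t : all (fun y => y <= t) s -> sumn s <= size s * t.
Proof. by elim: s => //= y s IH /andP [yt /IH h]; rewrite mulSn leq_add. Qed.

Lemma prefix_avg (w : seq nat) j :
  sorted geq w -> j <= size w -> j * sumn w <= size w * sumn (take j w).
Proof.
elim: w j => [|x w IH] [|j] //= pw; rewrite ltnS => jw.
have pw' : sorted geq w by apply: path_sorted pw.
have allx : all (fun y => y <= x) w.
  have tr : transitive geq by move=> b a c /= h1 h2; apply: leq_trans h2 h1.
  exact: order_path_min tr pw.
have IHj := IH j pw' jw.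
have sd : sumn (drop j w) <= size (drop j w) * x.
  by apply: sumn_le; apply/allP => y /mem_drop /(allP allx).
have sw : sumn w = sumn (take j w) + sumn (drop j w) by rewrite -sumn_cat cat_take_drop.
rewrite size_drop in sd.
move: IHj sd; rewrite sw.
set T1 := sumn (take j w); set D := sumn (drop j w); set N := size w.
move=> h1 h2.
have h3 : j * x <= N * x by rewrite leq_mul2r jw orbT.
nia.
Qed.

Lemma bigmin_le (T : finType) (N : nat) (F : T -> nat) v : \big[minn/N]_(u : T) F u <= F v.
Proof.
rewrite unlock; have : v \in index_enum T by rewrite mem_index_enum.
elim: (index_enum T) => //= u s IH; rewrite inE => /orP [/eqP <-|vs].
  exact: geq_minl.
by apply: leq_trans (geq_minr _ _) (IH vs).
Qed.

Lemma bigmin_leN (T : finType) (N : nat) (F : T -> nat) : \big[minn/N]_(u : T) F u <= N.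
Proof.
rewrite unlock; elim: (index_enum T) => //= u s IH.
exact: leq_trans (geq_minr _ _) IH.
Qed.

Lemma bigmin_ge (T : finType) (N : nat) (F : T -> nat) L :
  L <= N -> (forall u, L <= F u) -> L <= \big[minn/N]_(u : T) F u.
Proof.
move=> LN LF; apply: (big_ind (fun x => L <= x)) => // a b ha hb.
by rewrite leq_min ha hb.
Qed.

Lemma proper_sub (T : finType) (F G : {set {set T}}) col :
  proper F col -> G \subset F -> proper G col.
Proof. by move=> pc GF e1 e2 e1G e2G; apply: pc; apply: (subsetP GF). Qed.

Lemma deg_split (T : finType) (E R : {set {set T}}) v :
  R \subset E -> deg E v = deg R v + deg (E :\: R) v.
Proof.
move=> RE; rewrite /deg.
have -> : [set e in E | v \in e] = [set e in R | v \in e] :|: [set e in E :\: R | v \in e].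
  apply/setP => f; rewrite !inE; case fR: (f \in R); last by rewrite /=.
  by rewrite (subsetP RE f fR) /= orbF.
have := cardsUI [set e in R | v \in e] [set e in E :\: R | v \in e].
have -> : [set e in R | v \in e] :&: [set e in E :\: R | v \in e] = set0.
  by apply/setP => f; rewrite !inE; case: (f \in R); rewrite ?andbF.
by rewrite cards0 addn0.
Qed.

Unset Implicit Arguments.


Theorem lemma4p1 (T : finType) (E : {set {set T}}) (m : nat) :
  simple_graph E -> 0 < nedges E -> 0 < m -> m <= nedges E ->
  exists E' : {set {set T}},
    [/\ E' \subset E,
        nedges E' = m,
        ((maxdeg E')%:Z - (mindeg E')%:Z <= (maxdeg E)%:Z - (mindeg E)%:Z + 2)%R
      & ((maxdeg (E :\: E'))%:R <=
          ((maxdeg E).+1)%:R * (((nedges E - m)%:R) / (nedges E)%:R) + 1 :> rat)%R].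
Proof.
move=> sgE e0 m0 me.
have sE : sgraph E by move=> f fE; apply/eqP; move/forall_inP: sgE; apply.
set D := maxdeg E; set d := mindeg E; set ne := nedges E.
set n := D.+1; set k := (ne - m)%N.
have dn : forall v, (deg E v < n)%N by move=> v; rewrite ltnS; apply: leq_bigmax.
have [col [pc cn]] := vizing sE dn (subxx E).
pose s a := #|[set f in E | col f == a]|.
pose ord := sort (fun a b => s b <= s a)%N (iota 0 n).
have pord : perm_eq ord (iota 0 n) by rewrite /ord perm_sort perm_refl.
have uord : uniq ord by rewrite (perm_uniq pord) iota_uniq.
have sord : size ord = n by rewrite (perm_size pord) size_iota.
have mord : forall a, (a \in ord) = (a < n)%N by move=> a; rewrite (perm_mem pord) mem_iota.
have srt : sorted geq (map s ord).
  rewrite sorted_map; apply: sort_sorted => a b; exact: leq_total.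
pose S j := (\sum_(a <- take j ord) s a)%N.
have Scard : forall j, #|[set f in E | col f \in take j ord]| = S j.
  by move=> j; apply: card_cols; apply: take_uniq.
have Ssum : forall j, S j = sumn (take j (map s ord)).
  by move=> j; rewrite sumnE -map_take big_map.
have Sn : S n = ne.
  rewrite -Scard take_oversize ?sord // /ne /nedges; apply: eq_card => f; rewrite !inE.
  by case fE: (f \in E) => //=; rewrite mord cn.
have kne : (k < ne)%N by rewrite /k; lia.
pose P j := ((j <= n) && (S j <= k))%N.
have P0 : exists j, P j by exists 0%N; rewrite /P /S take0 big_nil.
have Pb : forall j, P j -> (j <= n)%N by move=> j /andP [].
case: (ex_maxnP P0 Pb) => j /andP [jn Sjk] jmax.
have jn' : (j < n)%N.
  rewrite ltn_neqAle jn andbT; apply/eqP => jE; move: Sjk; rewrite jE Sn.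
  by rewrite leqNgt kne.
set a0 := nth 0%N ord j.
have Sj1 : S j.+1 = (S j + s a0)%N.
  by rewrite /S (take_nth 0%N) ?sord // -cats1 big_cat big_seq1.
have kS : (k < S j + s a0)%N.
  rewrite -Sj1 ltnNge; apply/negP => h.
  have := jmax j.+1; rewrite /P jn' h => /(_ isT); by rewrite ltnn.
have avg : (j * ne <= n * S j)%N.
  have h := @prefix_avg (map s ord) j srt.
  rewrite size_map sord -Ssum in h.
  have h2 : sumn (map s ord) = ne by rewrite -Sn Ssum take_oversize // size_map sord.
  by rewrite -h2; apply: h.
pose A0 := [set f in E | col f \in take j ord].
pose C0 := [set f in E | col f == a0].
pose r := (k - S j)%N.
have rC : (r <= #|C0|)%N by rewrite /r /C0 -/(s a0); lia.
pose B := [set f in take r (enum C0)].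
have cB : #|B| = r.
  rewrite /B cardsE; have /card_uniqP -> : uniq (take r (enum C0)) by rewrite take_uniq ?enum_uniq.
  by rewrite size_takel // -cardE.
have BC : B \subset C0 by apply/subsetP => f; rewrite inE => /mem_take; rewrite mem_enum.
pose R := A0 :|: B.
have a0t : a0 \notin take j ord.
  have ad : a0 \in drop j ord.
    have -> : a0 = nth 0%N (drop j ord) 0 by rewrite nth_drop addn0.
    by apply: mem_nth; rewrite size_drop sord subn_gt0.
  have : uniq (take j ord ++ drop j ord) by rewrite cat_take_drop.
  rewrite cat_uniq => /and3P [_ /hasPn h _].
  exact: (h a0 ad).
have A0E : A0 \subset E by apply/subsetP => f; rewrite inE => /andP [].
have C0E : C0 \subset E by apply/subsetP => f; rewrite inE => /andP [].
have RE : R \subset E by rewrite subUset A0E (subset_trans BC C0E).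
have cR : #|R| = k.
  have := cardsUI A0 B.
  have -> : A0 :&: B = set0.
    apply/setP => f; rewrite inE in_set0; apply/negP => /andP [fA0 fB].
    move: fA0; rewrite inE => /andP [_ cf].
    have := subsetP BC f fB; rewrite inE => /andP [_ /eqP cf'].
    by move: cf; rewrite cf' (negbTE a0t).
  by rewrite cards0 addn0 cB /A0 Scard /r => ->; lia.
pose E' := E :\: R.
have cE' : nedges E' = m.
  rewrite /nedges /E' cardsD (setIidPr RE) cR -/(nedges E) -/ne /k; lia.
have EE' : E :\: E' = R by rewrite /E' setDDr setDv set0U (setIidPr RE).
have tj1 : take j.+1 ord = rcons (take j ord) a0 by rewrite (take_nth 0%N) ?sord.
have degR : forall v, (deg R v <= j.+1)%N.
  move=> v; have -> : j.+1 = size (take j.+1 ord) by rewrite size_takel ?sord.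
  apply: deg_colors; first exact: proper_sub pc RE.
  move=> f fR _; rewrite tj1 mem_rcons inE; case/setUP: fR => [fA|fB].
    by move: fA; rewrite inE => /andP [_ ->]; rewrite orbT.
  by have := subsetP BC f fB; rewrite inE => /andP [_ ->].
have degE' : forall v, (deg E' v <= n - j)%N.
  move=> v; have -> : (n - j)%N = size (drop j ord) by rewrite size_drop sord.
  apply: deg_colors; first by apply: proper_sub pc _; apply: subsetDl.
  move=> f; rewrite inE => /andP [fR fE] _.
  have fA0 : f \notin A0 by apply: contra fR => h; apply/setUP; left.
  have : col f \in take j ord ++ drop j ord by rewrite cat_take_drop mord cn.
  by rewrite mem_cat; move: fA0; rewrite inE fE /= => /negbTE ->.
have dsplit : forall v, deg E v = (deg R v + deg E' v)%N by move=> v; apply: deg_split.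
have maxE' : (maxdeg E' <= n - j)%N by apply/bigmax_leqP => v _; apply: degE'.
have dT : (d <= #|T|)%N.
  exact: bigmin_leN.
have minE' : (d - j.+1 <= mindeg E')%N.
  apply: bigmin_ge; first by apply: leq_trans (leq_subr _ _) dT.
  move=> u; have := bigmin_le #|T| (deg E) u; rewrite -/(mindeg E) -/d dsplit.
  by have := degR u; lia.
have maxR : (maxdeg R <= j.+1)%N by apply/bigmax_leqP => v _; apply: degR.
exists E'; split.
- exact: subsetDl.
- exact: cE'.
- rewrite -/D -/d; move: maxE' minE' jn'; rewrite /n; lia.
- rewrite EE' -/ne -/D -/k.
  apply: (@le_trans _ _ ((j.+1)%:R)%R); first by rewrite ler_nat.
  rewrite -addn1 natrD lerD2r mulrA ler_pdivlMr ?ltr0n // -!natrM ler_nat.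
  by apply: leq_trans avg _; apply: leq_mul.
Qed.
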